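(* Let $A$ and $B$ be two $n\times n$ generalized tournament matrices with the same principal minors of orders at most $4$. Then $A$ is inseparable if and only if $B$ is inseparable.
   Context: A generalized tournament matrix of order $n$ is a real $n\times n$ matrix $M=(m_{ij})$ with nonnegative entries satisfying $M+M^{t}=J_n-I_n$. Write $[n]=\{1,\ldots,n\}$. A clan of $M$ is a subset $X\subseteq[n]$ such that for all $i,j\in X$ and $k\in[n]\setminus X$, $m_{ik}=m_{jk}$ and $m_{ki}=m_{kj}$. $M$ is separable if $[n]$ can be partitioned into two nonempty clans, and inseparable otherwise. *)

(* Defs.v *)
From HB Require Import structures.
From mathcomp Require Import all_boot all_order all_algebra.
From mathcomp Require Import reals.
Set Implicit Arguments. Unset Strict Implicit. Unset Printing Implicit Defensive.
Import Order.TTheory GRing.Theory Num.Theory.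
Local Open Scope ring_scope.

Definition gen_tournament (R : realType) (n : nat) (M : 'M[R]_n) : Prop :=
  (forall i j, 0 <= M i j) /\
  (forall i j, M i j + M j i = (if i == j then 0 else 1)).

Definition clan (R : realType) (n : nat) (M : 'M[R]_n) (X : {set 'I_n}) : Prop :=
  forall i j k, i \in X -> j \in X -> k \notin X ->
    M i k = M j k /\ M k i = M k j.

Definition separable (R : realType) (n : nat) (M : 'M[R]_n) : Prop :=
  exists X : {set 'I_n}, [/\ X != set0, ~: X != set0, clan M X & clan M (~: X)].

Definition inseparable (R : realType) (n : nat) (M : 'M[R]_n) : Prop :=
  ~ separable M.

Definition principal_submx (R : realType) (n : nat) (M : 'M[R]_n)
    (I : {set 'I_n}) : 'M[R]_#|I| :=
  \matrix_(i < #|I|, j < #|I|) M (enum_val i) (enum_val j).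

Definition principal_minor (R : realType) (n : nat) (M : 'M[R]_n)
    (I : {set 'I_n}) : R :=
  \det (principal_submx M I).

(* Main.v *)
Require Import Defs.
From HB Require Import structures.
From mathcomp Require Import all_boot all_order all_algebra.
From mathcomp Require Import reals.
From mathcomp Require Import ring lra.
Import Order.TTheory GRing.Theory Num.Theory.
Local Open Scope ring_scope.
Set Implicit Arguments. Unset Strict Implicit.

Lemma det2 (R : comNzRingType) (g : nat -> nat -> R) :
  \det (\matrix_(i < 2, j < 2) g i j) = g 0 0 * g 1 1 - g 0 1 * g 1 0.
Proof.
rewrite (expand_det_row _ ord0) !big_ord_recr big_ord0 /= /cofactor !det_mx11 !mxE /=.
ring.
Qed.

Lemma det3 (R : comNzRingType) (g : nat -> nat -> R) :
  \det (\matrix_(i < 3, j < 3) g i j) =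
   g 0 0 * (g 1 1 * g 2 2 - g 1 2 * g 2 1)
 - g 0 1 * (g 1 0 * g 2 2 - g 1 2 * g 2 0)
 + g 0 2 * (g 1 0 * g 2 1 - g 1 1 * g 2 0).
Proof.
rewrite (expand_det_row _ ord0) !big_ord_recr big_ord0 /= /cofactor.
rewrite !(expand_det_row _ ord0) !big_ord_recr big_ord0 /= /cofactor !det_mx11 !mxE /=.
rewrite !big_ord0 /bump /=. ring.
Qed.

Lemma det2g (R : comNzRingType) m (g : nat -> nat -> R) : m = 2%N ->
  \det (\matrix_(i < m, j < m) g i j) = g 0 0 * g 1 1 - g 0 1 * g 1 0.
Proof. move=> ->; exact: det2. Qed.

Lemma det3g (R : comNzRingType) m (g : nat -> nat -> R) : m = 3%N ->
  \det (\matrix_(i < m, j < m) g i j) =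
   g 0 0 * (g 1 1 * g 2 2 - g 1 2 * g 2 1)
 - g 0 1 * (g 1 0 * g 2 2 - g 1 2 * g 2 0)
 + g 0 2 * (g 1 0 * g 2 1 - g 1 1 * g 2 0).
Proof. move=> ->; exact: det3. Qed.

Lemma submx_nth (R : realType) n (M : 'M[R]_n) (I : {set 'I_n}) x0 :
  principal_submx M I =
  \matrix_(a < #|I|, b < #|I|) (fun a b : nat => M (nth x0 (enum I) a) (nth x0 (enum I) b)) a b.
Proof. by apply/matrixP => a b; rewrite !mxE !(fintype.enum_val_nth x0). Qed.

Definition f3 (R : realType) n (M : 'M[R]_n) i j k :=
  M i j * M j k * M k i + M i k * M k j * M j i.

Lemma minor2 (R : realType) n (M : 'M[R]_n) i j :
  (forall k, M k k = 0) -> i != j ->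
  principal_minor M [set i; j] = - (M i j * M j i).
Proof.
move=> M0 ij; rewrite /principal_minor (submx_nth _ _ i).
have cI : #|[set i; j]| = 2%N by rewrite cards2 ij.
rewrite (det2g (fun a b : nat => M (nth i (enum [set i; j]) a) (nth i (enum [set i; j]) b))) //.
have U := enum_uniq (mem [set i; j]).
have Mem : forall x, x \in enum [set i; j] -> (x == i) || (x == j).
  by move=> x; rewrite mem_enum !inE.
have := cI; rewrite cardE.
case E: (enum _) U Mem => [|p [|q [|r t]]] //= U Mem _.
rewrite !M0; move: U.
have := Mem p; have := Mem q; rewrite !inE !eqxx ?orbT /=.
move=> /(_ isT) /orP [] /eqP -> /(_ isT) /orP [] /eqP ->; rewrite ?inE ?eqxx //= => _; ring.
Qed.

Lemma minor3 (R : realType) n (M : 'M[R]_n) i j k :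
  (forall k, M k k = 0) -> i != j -> i != k -> j != k ->
  principal_minor M [set i; j; k] = f3 M i j k.
Proof.
move=> M0 ij ik jk; rewrite /principal_minor (submx_nth _ _ i).
have cI : #|[set i; j; k]| = 3%N.
  by rewrite setUC cardsU1 cards2 !inE negb_or ij ![k == _]eq_sym ik jk.
rewrite (det3g (fun a b : nat => M (nth i (enum [set i; j; k]) a) (nth i (enum [set i; j; k]) b))) //.
have U := enum_uniq (mem [set i; j; k]).
have Mem : forall x, x \in enum [set i; j; k] -> [|| x == i, x == j | x == k].
  by move=> x; rewrite mem_enum !inE -orbA.
have := cI; rewrite cardE.
case E: (enum _) U Mem => [|p [|q [|r [|s t]]]] //= U Mem _.
rewrite !M0 /f3; move: U.
have := Mem p; have := Mem q; have := Mem r; rewrite !inE !eqxx ?orbT /=.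
move=> /(_ isT) /or3P [] /eqP -> /(_ isT) /or3P [] /eqP -> /(_ isT) /or3P [] /eqP ->;
  rewrite ?inE ?eqxx //= ?orbT ?andbF //= => _; ring.
Qed.

Lemma gt_diag (R : realType) n (M : 'M[R]_n) : gen_tournament M -> forall i, M i i = 0.
Proof. case=> h0 h1 i; have := h1 i i; have := h0 i i; rewrite eqxx; lra. Qed.

Lemma gt_sym (R : realType) n (M : 'M[R]_n) i j : gen_tournament M -> i != j ->
  M j i = 1 - M i j.
Proof. case=> _ h1 ij; have := h1 i j; rewrite (negbTE ij); lra. Qed.

Section Main.
Variables (R : realType) (n : nat) (A B : 'M[R]_n).
Hypotheses (gA : gen_tournament A) (gB : gen_tournament B).
Hypothesis H : forall I : {set 'I_n}, (#|I| <= 4)%N -> principal_minor A I = principal_minor B I.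

Lemma flip2 i j : i != j -> B i j = A i j \/ B i j = 1 - A i j.
Proof.
move=> ij.
have c2 : (#|[set i; j]| <= 4)%N by rewrite cards2 ij.
move: (H c2); rewrite !minor2 //; try exact: gt_diag.
rewrite (gt_sym gA ij) (gt_sym gB ij) => e.
have : (B i j - A i j) * (1 - A i j - B i j) = 0.
  have -> : (B i j - A i j) * (1 - A i j - B i j) =
    - (A i j * (1 - A i j)) - - (B i j * (1 - B i j)) by ring.
  by rewrite e subrr.
move/eqP; rewrite mulf_eq0 => /orP [/eqP h | /eqP h]; [left | right]; lra.
Qed.

Lemma tri i j k : i != j -> i != k -> j != k -> f3 A i j k = f3 B i j k.
Proof.
move=> ij ik jk.
have c3 : (#|[set i; j; k]| <= 4)%N.
  by rewrite setUC cardsU1 cards2 !inE negb_or ij ![k == _]eq_sym ik jk.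
by move: (H c3); rewrite !minor3 //; exact: gt_diag.
Qed.

Lemma T1 x x' y c : x != x' -> x != y -> x' != y ->
  A x y = c -> A x' y = c -> B x y != c -> B x' y = c -> B x x' = 1 - c.
Proof.
move=> xx' xy x'y Axy Ax'y Bxy Bx'y.
have Bxy' : B x y = 1 - c.
  by case: (flip2 xy) => e; [move: Bxy; rewrite e Axy eqxx | rewrite e Axy].
have E := tri xx' xy x'y; move: E; rewrite /f3.
rewrite (gt_sym gA xx') (gt_sym gA xy) (gt_sym gA x'y) (gt_sym gB xx') (gt_sym gB xy) (gt_sym gB x'y).
rewrite Axy Ax'y Bxy' Bx'y => e.
have ne : 2 * c - 1 != 0.
  apply/eqP => h; move: Bxy; rewrite Bxy'; have -> : 1 - c = c by lra.
  by rewrite eqxx.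
have : (2 * c - 1) * (B x x' - (1 - c)) = 0.
  have -> : (2 * c - 1) * (B x x' - (1 - c)) =
    (B x x' * c * (1 - (1 - c)) + (1 - c) * (1 - c) * (1 - B x x'))
    - (A x x' * c * (1 - c) + c * (1 - c) * (1 - A x x')) by ring.
  by rewrite e subrr.
move/eqP; rewrite mulf_eq0 (negbTE ne) /= => /eqP h; lra.
Qed.

Lemma T2 x y y' c : x != y -> x != y' -> y != y' ->
  A x y = c -> A x y' = c -> B x y != c -> B x y' = c -> B y y' = c.
Proof.
move=> xy xy' yy' Axy Axy' Bxy Bxy'.
have Bxy2 : B x y = 1 - c.
  by case: (flip2 xy) => e; [move: Bxy; rewrite e Axy eqxx | rewrite e Axy].
have E := tri xy xy' yy'; move: E; rewrite /f3.
rewrite (gt_sym gA yy') (gt_sym gA xy) (gt_sym gA xy') (gt_sym gB yy') (gt_sym gB xy) (gt_sym gB xy').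
rewrite Axy Axy' Bxy2 Bxy' => e.
have ne : 1 - 2 * c != 0.
  apply/eqP => h; move: Bxy; rewrite Bxy2; have -> : 1 - c = c by lra.
  by rewrite eqxx.
have : (1 - 2 * c) * (B y y' - c) = 0.
  have -> : (1 - 2 * c) * (B y y' - c) =
    ((1 - c) * B y y' * (1 - c) + c * (1 - B y y') * (1 - (1 - c)))
    - (c * A y y' * (1 - c) + c * (1 - A y y') * (1 - c)) by ring.
  by rewrite e subrr.
move/eqP; rewrite mulf_eq0 (negbTE ne) /= => /eqP h; lra.
Qed.

Lemma cross_sep (P : {set 'I_n}) c' : P != set0 -> ~: P != set0 ->
  (forall p q, p \in P -> q \notin P -> B p q = c') -> separable B.
Proof.
move=> P0 CP0 hc; exists P; split => //.
- move=> i j k iP jP kP; rewrite (hc i k) // (hc j k) //; split => //.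
  have ki : i != k by apply/eqP => e; move: kP; rewrite -e iP.
  have kj : j != k by apply/eqP => e; move: kP; rewrite -e jP.
  by rewrite (gt_sym gB ki) (gt_sym gB kj) (hc i k) // (hc j k).
- move=> i j k; rewrite !inE negbK => iP jP kP.
  have ki : k != i by apply/eqP => e; move: iP; rewrite -e kP.
  have kj : k != j by apply/eqP => e; move: jP; rewrite -e kP.
  by rewrite (gt_sym gB ki) (gt_sym gB kj) (hc k i) // (hc k j).
Qed.

Lemma sep_transfer : separable A -> separable B.
Proof.
case=> X [X0 CX0 clX clCX].
case/set0Pn: X0 => x0 x0X; case/set0Pn: CX0 => y0; rewrite inE => y0X.
set c := A x0 y0.
have Ac : forall x y, x \in X -> y \notin X -> A x y = c.
  move=> x y xX yX.
  have [-> _] := clX x x0 y xX x0X yX.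
  have yC : y \in ~: X by rewrite inE.
  have y0C : y0 \in ~: X by rewrite inE.
  have x0C : x0 \notin ~: X by rewrite inE negbK.
  by have [_ ->] := clCX y y0 x0 yC y0C x0C.
have neXY : forall x y, x \in X -> y \notin X -> x != y.
  by move=> x y xX yX; apply/eqP => e; move: yX; rewrite -e xX.
case: (boolP [exists x, exists y, [&& x \in X, y \notin X & B x y == c]]); last first.
  move=> hn; apply: (@cross_sep X (1 - c)).
  - by apply/set0Pn; exists x0.
  - by apply/set0Pn; exists y0; rewrite inE.
  move=> p q pX qX.
  have nb : B p q != c.
    apply/negP => e; move/negP: hn; apply; apply/existsP; exists p; apply/existsP; exists q.
    by rewrite pX qX e.
  by case: (flip2 (neXY _ _ pX qX)) => e; [move: nb; rewrite e Ac ?eqxx | rewrite e Ac].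
case/existsP => x1 /existsP [y1 /and3P [x1X y1X /eqP B11]].
pose F x := [set y | (y \notin X) && (B x y != c)].
have nocross : forall x x' y y', x \in X -> x' \in X -> y \notin X -> y' \notin X ->
  y \in F x -> y \notin F x' -> y' \in F x' -> y' \notin F x -> False.
  move=> x x' y y' xX x'X yX y'X.
  rewrite !inE yX y'X /= !negbK => h1 /eqP h2 h3 /eqP h4.
  have xx' : x != x' by apply/eqP => e; rewrite e h2 eqxx in h1.
  have e1 := T1 xx' (neXY _ _ xX yX) (neXY _ _ x'X yX) (Ac _ _ xX yX) (Ac _ _ x'X yX) h1 h2.
  have x'x : x' != x by rewrite eq_sym.
  have e2 := T1 x'x (neXY _ _ x'X y'X) (neXY _ _ xX y'X)
     (Ac _ _ x'X y'X) (Ac _ _ xX y'X) h3 h4.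
  have e3 := gt_sym gB xx'.
  have Bxy : B x y = 1 - c.
    by case: (flip2 (neXY _ _ xX yX)) => e; [move: h1; rewrite e Ac ?eqxx | rewrite e Ac].
  have : 1 - c = c by lra.
  by move=> e; move: h1; rewrite Bxy e eqxx.
have [x0' x0'X' minx0'] := arg_minnP (fun x => #|F x|) x1X.
have x0'X : x0' \in X := x0'X'.
have minx0 : forall x, x \in X -> (#|F x0'| <= #|F x|)%N := minx0'.
clear x0'X' minx0'.
set F0 := F x0'.
have chain : forall x, x \in X -> F0 \subset F x.
  move=> x xX; apply/subsetP => y yF0; apply/negPn/negP => yFx.
  have sub : F x \subset F0.
    apply/subsetP => y' y'Fx; apply/negPn/negP => y'F0.
    have yX : y \notin X by move: yF0; rewrite inE => /andP [].
    have y'X : y' \notin X by move: y'Fx; rewrite inE => /andP [].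
    exact: (nocross x0' x y y' x0'X xX yX y'X yF0 yFx y'Fx y'F0).
  have pr : F x \proper F0 by rewrite properE sub /=; apply/subsetPn; exists y.
  by have := leq_ltn_trans (minx0 x xX) (proper_card pr); rewrite ltnn.
have inF : forall x y, (y \in F x) = (y \notin X) && (B x y != c) by move=> x y; rewrite inE.
pose P := [set v | ((v \in X) && (F v == F0)) || (v \in F0)].
have inP : forall v, (v \in P) = ((v \in X) && (F v == F0)) || (v \in F0).
  by move=> v; rewrite /P !inE.
apply: (@cross_sep P c).
- by apply/set0Pn; exists x0'; rewrite inP x0'X eqxx.
- apply/set0Pn; exists y1; rewrite in_setC inP negb_or (negbTE y1X) /=.
  apply/negP => y1F0; move/subsetP: (chain x1 x1X) => /(_ y1 y1F0).
  by rewrite inF y1X B11 eqxx.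
move=> p q; rewrite !inP negb_or => /orP [/andP [pX /eqP Fp] | pF0] /andP [hq1 hq2].
- case: (boolP (q \in X)) => qX.
  + move: hq1; rewrite qX /= => FqF0.
    have : ~~ (F q \subset F0).
      by apply: contra FqF0 => s; rewrite eqEsubset s chain.
    case/subsetPn => y yFq yF0.
    have yX : y \notin X by move: yFq; rewrite inF => /andP [].
    have Bqy : B q y != c by move: yFq; rewrite inF => /andP [].
    have Bpy : B p y = c by apply/eqP; move: yF0; rewrite -Fp inF yX /= negbK.
    have qp : q != p by apply/eqP => e; move: FqF0; rewrite e Fp eqxx.
    have := T1 qp (neXY _ _ qX yX) (neXY _ _ pX yX) (Ac _ _ qX yX) (Ac _ _ pX yX) Bqy Bpy.
    by rewrite (gt_sym gB qp) => e; rewrite e; ring.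
  + by apply/eqP; move: hq2; rewrite -Fp inF qX /= negbK.
- have pX : p \notin X by move: pF0; rewrite inF => /andP [].
  have Bp : B x0' p != c by move: pF0; rewrite inF => /andP [].
  case: (boolP (q \in X)) => qX.
  + have pFq : p \in F q by move/subsetP: (chain q qX); apply.
    have Bqp : B q p != c by move: pFq; rewrite inF => /andP [].
    have qp := neXY _ _ qX pX.
    have Bqp' : B q p = 1 - c.
      by case: (flip2 qp) => e; [move: Bqp; rewrite e Ac ?eqxx | rewrite e Ac].
    by rewrite (gt_sym gB qp) Bqp'; ring.
  + have Bq : B x0' q = c by apply/eqP; move: hq2; rewrite inF qX /= negbK.
    have pq : p != q by apply/eqP => e; move: hq2; rewrite -e pF0.
    exact: (T2 (neXY _ _ x0'X pX) (neXY _ _ x0'X qX) pq (Ac _ _ x0'X pX) (Ac _ _ x0'X qX) Bp Bq).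
Qed.

End Main.

Unset Implicit Arguments.

Theorem proposition5p5 (R : realType) (n : nat) (A B : 'M[R]_n) :
  gen_tournament A -> gen_tournament B ->
  (forall I : {set 'I_n}, (#|I| <= 4)%N -> principal_minor A I = principal_minor B I) ->
  (inseparable A <-> inseparable B).
Proof.
move=> gA gB H; split => hi hs; apply: hi.
- have H' : forall I : {set 'I_n}, (#|I| <= 4)%N -> principal_minor B I = principal_minor A I.
    by move=> I hI; rewrite (H I hI).
  exact: (sep_transfer gB gA H' hs).
- exact: (sep_transfer gA gB H hs).
Qed.
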